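(* Let $Y$ be a $\mathbb C$-vector space. Then the pairing $\langle\sum_{u\in M}A_ux^{-u},\sum_{u\in M}B_ux^u\rangle=\sum_uB_uA_u$ induces an isomorphism $\mathcal K_0(Y)\cong\mathrm{Hom}_{\mathbb C}(\mathcal W_0,Y)$.
   Context: Let $A=\{\mathbf a_1,\dots,\mathbf a_m\}\subseteq\mathbb Z^n$ be linearly independent over $\mathbb R$, with $\mathbf a_j=(a_{1j},\dots,a_{nj})$, and $\ell_1,\dots,\ell_m$ positive integers (part of a relation $\ell_0\mathbf a_0=\sum_j\ell_j\mathbf a_j$, $\ell_0=\sum_j\ell_j$, $\mathbf a_0\in\mathbb Z^n$, $\gcd(\ell_0,\dots,\ell_m)=1$). Let $f_0=\sum_{j=1}^m\ell_jx^{\mathbf a_j}$. Let $V$ be the real span of $A$, $V_{\mathbb Z}=V\cap\mathbb Z^n$, $C(A)$ the real cone generated by $A$, $M=V_{\mathbb Z}\cap C(A)$. Let $S_0$ be the $\mathbb C$-span of $\{x^u:u\in M\}$, $D_{i,0}=x_i\partial/\partial x_i+x_i\partial f_0/\partial x_i$ ($i=1,\dots,n$), and $\mathcal W_0=S_0/\sum_iD_{i,0}S_0$. For a $\mathbb C$-vector space $Y$ let $R_0(Y)$ be the set of formal sums $\xi=\sum_{u\in M}A_ux^{-u}$ with $A_u\in Y$, and define $D^*_{i,0}(\xi)=\sum_{v\in M}\big(v_iA_v+\sum_{j=1}^m\ell_ja_{ij}A_{v+\mathbf a_j}\big)x^{-v}$. Let $\mathcal K_0(Y)=\{\xi\in R_0(Y):D^*_{i,0}(\xi)=0\text{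 for }i=1,\dots,n\}$. *)

(* Defs.v *)
From HB Require Import structures.
From mathcomp Require Import all_boot all_order all_algebra.
From mathcomp Require Import boolp reals.
From mathcomp Require Import complex.
From mathcomp Require Import finmap monalg.

Set Implicit Arguments.
Unset Strict Implicit.
Unset Printing Implicit Defensive.

Import Order.TTheory GRing.Theory Num.Theory.
Local Open Scope ring_scope.

Definition Zn (n : nat) := {ffun 'I_n -> int}.

Section Setup.
Variables (R : realType) (n m : nat) (a : 'I_m -> Zn n).

Definition lin_indep : Prop :=
  forall c : 'I_m -> R,
    (forall i : 'I_n, \sum_(j < m) c j * (a j i)%:~R = 0) -> forall j, c j = 0.

Definition inV (u : Zn n) : Prop :=
  exists c : 'I_m -> R, forall i : 'I_n, (u i)%:~R = \sum_(j < m) c j * (a j i)%:~R.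

Definition inCone (u : Zn n) : Prop :=
  exists c : 'I_m -> R, (forall j, 0 <= c j) /\
    forall i : 'I_n, (u i)%:~R = \sum_(j < m) c j * (a j i)%:~R.

(* M = V_Z  ∩ C(A)  (u ranges over Z^n, so V ∩ Z^n is automatic) *)
Definition inM (u : Zn n) : bool := `[< inV u /\ inCone u >].

Definition Mty := {u : Zn n | inM u}.
HB.instance Definition _ := Choice.on Mty.

Lemma inM_shift (u : Mty) (j : 'I_m) : inM (val u + a j).
Proof.
case: u => u /= /asboolP [[c Hc] [d [Hd0 Hd]]].
apply/asboolP; split.
- exists (fun k => c k + (k == j)%:R) => i.
  rewrite ffunE rmorphD /= Hc.
  under [in RHS]eq_bigr => k _ do rewrite mulrDl.
  rewrite big_split /=; congr (_ + _).
  rewrite (bigD1 j) //= eqxx mul1r big1 ?addr0 // => k /negbTE ->.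
  by rewrite mul0r.
- exists (fun k => d k + (k == j)%:R); split.
    by move=> k; apply: addr_ge0; rewrite ?ler0n.
  move=> i; rewrite ffunE rmorphD /= Hd.
  under [in RHS]eq_bigr => k _ do rewrite mulrDl.
  rewrite big_split /=; congr (_ + _).
  rewrite (bigD1 j) //= eqxx mul1r big1 ?addr0 // => k /negbTE ->.
  by rewrite mul0r.
Qed.

Definition shiftM (u : Mty) (j : 'I_m) : Mty := exist (fun v => inM v) _ (inM_shift u j).

Variable ell : 'I_m -> nat.

Local Notation C := (complex R).

(* S_0 = C-span of the monomials x^u, u in M *)
Definition S0 := {malg C[Mty]}.

Definition D0_mon (i : 'I_n) (u : Mty) : S0 :=
  << ((val u) i)%:~R *g u >> +
  \sum_(j < m) << ((ell j)%:R * ((a j) i)%:~R) *g shiftM u j >>.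

Definition D0 (i : 'I_n) (s : S0) : S0 :=
  \sum_(u <- msupp s) s@_u *: D0_mon i u.

Variable Y : lmodType C.

(* Hom_C(W_0, Y), W_0 = S_0 / sum_i D_{i,0} S_0, realised as the C-linear maps
   S_0 -> Y vanishing on sum_i D_{i,0} S_0 *)
Definition homW0 (phi : S0 -> Y) : Prop :=
  (forall (c : C) (s t : S0), phi (c *: s + t) = c *: phi s + phi t) /\
  (forall s : 'I_n -> S0, phi (\sum_(i < n) D0 i (s i)) = 0).

(* R_0(Y): formal sums  xi = sum_{u in M} A_u x^{-u}, i.e. coefficient families *)
Definition R0 := Mty -> Y.

Definition D0star (i : 'I_n) (xi : R0) : R0 :=
  fun v => ((val v) i)%:~R *: xi v +
           \sum_(j < m) ((ell j)%:R * ((a j) i)%:~R) *: xi (shiftM v j).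

Definition K0 (xi : R0) : Prop := forall i : 'I_n, D0star i xi = (fun _ => 0).

Definition pairing (xi : R0) (s : S0) : Y := \sum_(u <- msupp s) s@_u *: xi u.

End Setup.

(* Main.v *)
Require Import Defs.
From HB Require Import structures.
From mathcomp Require Import all_boot all_order all_algebra.
From mathcomp Require Import boolp reals.
From mathcomp Require Import complex.
From mathcomp Require Import finmap monalg.
Import GRing.Theory.
Local Open Scope ring_scope.
Set Implicit Arguments.
Unset Strict Implicit.

Section Gen.
Context (K : choiceType) (C : nzRingType) (Y : lmodType C).

Definition gpair (f : K -> Y) (s : {malg C[K]}) : Y :=
  \sum_(u <- msupp s) s@_u *: f u.

Lemma gpairEw f s (d : {fset K}) : (msupp s `<=` d)%fset ->
  gpair f s = \sum_(u <- d) s@_u *: f u.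
Proof.
move=> le; rewrite /gpair (big_fset_incl _ le) => //= x xd /mcoeff_outdom ->.
by rewrite scale0r.
Qed.

Lemma gpair0 f : gpair f 0 = 0.
Proof. by rewrite /gpair msupp0 big_seq_fset0. Qed.

Lemma gpairD f s t : gpair f (s + t) = gpair f s + gpair f t.
Proof.
rewrite (@gpairEw f (s + t) (msupp s `|` msupp t)%fset) ?msuppD_le //.
rewrite (@gpairEw f s (msupp s `|` msupp t)%fset) ?fsubsetUl //.
rewrite (@gpairEw f t (msupp s `|` msupp t)%fset) ?fsubsetUr //.
rewrite -big_split /=; apply: eq_bigr => u _.
by rewrite mcoeffD scalerDl.
Qed.

Lemma gpairZ f c s : gpair f (c *: s) = c *: gpair f s.
Proof.
rewrite (@gpairEw f (c *: s) (msupp s)) ?msuppZ_le // /gpair scaler_sumr.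
by apply: eq_bigr => u _; rewrite mcoeffZ scalerA.
Qed.

Lemma gpairU f c u : gpair f << c *g u >> = c *: f u.
Proof. by rewrite (@gpairEw f << c *g u >> _ msuppU_le) big_seq_fset1 mcoeffUU. Qed.

Lemma gpair_sum f (I : Type) (r : seq I) (P : pred I) (F : I -> {malg C[K]}) :
  gpair f (\sum_(i <- r | P i) F i) = \sum_(i <- r | P i) gpair f (F i).
Proof. exact: (big_morph (gpair f) (gpairD f) (gpair0 f)). Qed.

Lemma malgU_Z (c : C) (u : K) : << c *g u >> = c *: << u >>.
Proof.
apply/malgP => k; rewrite mcoeffZ !mcoeffU.
by case: (u == k); rewrite ?mulr1 ?mulr0.
Qed.

Section Phi.
Variable phi : {malg C[K]} -> Y.
Hypothesis Hl : forall (c : C) (s t : {malg C[K]}), phi (c *: s + t) = c *: phi s + phi t.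

Lemma phi0 : phi 0 = 0.
Proof.
have h := Hl 1 0 0; rewrite scaler0 add0r scale1r in h.
have: phi 0 + phi 0 - phi 0 = phi 0 - phi 0 by rewrite -h.
by rewrite addrK subrr.
Qed.

Lemma phiD s t : phi (s + t) = phi s + phi t.
Proof. by have := Hl 1 s t; rewrite !scale1r. Qed.

Lemma phiZ c s : phi (c *: s) = c *: phi s.
Proof. by have := Hl c s 0; rewrite !addr0 phi0 addr0. Qed.

Lemma phi_sum (I : Type) (r : seq I) (P : pred I) (F : I -> {malg C[K]}) :
  phi (\sum_(i <- r | P i) F i) = \sum_(i <- r | P i) phi (F i).
Proof. exact: (big_morph phi phiD phi0). Qed.

Lemma phi_decomp s : phi s = gpair (fun u => phi << u >>) s.
Proof.
rewrite {1}(monalgE s) phi_sum /gpair; apply: eq_bigr => u _.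
by rewrite malgU_Z phiZ.
Qed.
End Phi.
End Gen.

Theorem proposition2p9 (R : realType) (n m : nat) (a : 'I_m -> Zn n)
    (ell : 'I_m -> nat) (a0 : Zn n)
    (Hind : lin_indep R a)
    (Hpos : forall j, (0 < ell j)%N)
    (Hrel : forall i : 'I_n,
        ((\sum_(j < m) ell j)%:Z * a0 i = \sum_(j < m) (ell j)%:Z * a j i)%R)
    (Hgcd : gcdn (\sum_(j < m) ell j) (\big[gcdn/0%N]_(j < m) ell j) = 1%N)
    (Y : lmodType (complex R)) :
  (* the pairing map xi |-> < xi , - > is C-linear *)
  (forall (c : complex R) (xi eta : @R0 R n m a Y) (s : S0 R a),
      pairing (fun u => c *: xi u + eta u) s
      = c *: pairing xi s + pairing eta s) /\
  (* it sends K_0(Y) into Hom_C(W_0, Y) *)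
  (forall xi : @R0 R n m a Y, K0 ell xi -> homW0 ell (pairing xi)) /\
  (* and every element of Hom_C(W_0, Y) comes from a unique xi in K_0(Y) *)
  (forall phi : S0 R a -> Y, homW0 ell phi ->
      exists! xi : @R0 R n m a Y, K0 ell xi /\ forall s, phi s = pairing xi s).
Proof.
have PE : forall xi s, @pairing R n m a Y xi s = gpair xi s by [].
have D0m : forall (xi : R0 a Y) i u,
    gpair xi (D0_mon ell i u) = D0star ell i xi u.
  move=> xi i u; rewrite /D0_mon /D0star gpairD gpairU gpair_sum.
  by congr (_ + _); apply: eq_bigr => j _; rewrite gpairU.
split.
  move=> c xi eta s; rewrite !PE /gpair scaler_sumr -big_split /=.
  by apply: eq_bigr => u _; rewrite scalerDr scalerA [s@_u * c]mulrC -scalerA.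
split.
  move=> xi HK; split.
    by move=> c s t; rewrite !PE gpairD gpairZ.
  move=> s; rewrite PE gpair_sum big1 // => i _.
  rewrite /D0 gpair_sum big1 // => u _.
  by rewrite gpairZ D0m HK scaler0.
move=> phi [Hl Hv].
have D0U : forall (i : 'I_n) (u : Mty R a), D0 ell i << u >> = D0_mon ell i u.
  move=> i u; rewrite /D0; have -> : msupp (<< u >> : S0 R a) = [fset u]%fset by rewrite msuppU oner_eq0.
  by rewrite big_seq_fset1 mcoeffUU scale1r.
have D00 : forall i : 'I_n, D0 ell i (0 : S0 R a) = 0.
  move=> i; rewrite /D0 (_ : msupp _ = fset0) ?big_seq_fset0 //.
  by apply/fsetP => x; rewrite in_fset0 -mcoeff_neq0 mcoeff0 eqxx.
exists (fun u => phi << u >>); split.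
  split; last by move=> s; rewrite PE; apply: phi_decomp.
  move=> i; apply: funext => v.
  have := Hv (fun k => if k == i then << v >> else 0).
  rewrite (bigD1 i) //= eqxx big1 ?addr0; last first.
    by move=> k /negbTE ->; rewrite D00.
  rewrite D0U => <-.
  rewrite (phi_decomp Hl) D0m //.
move=> xi' [HK Hp]; apply: funext => u.
by rewrite Hp PE gpairU scale1r.
Qed.
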